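(* Let $S$ be an MPD-semigroup generated by $\mathcal A=\{\mathbf a_1,\dots,\mathbf a_n\}\subset\mathbb N^d$. Then every Frobenius element of $S$ is a Frobenius vector of $S$.
   Context: $S$ is an MPD-semigroup if, for a field $\Bbbk$, the $\Bbbk[x_1,\dots,x_n]$-module $\Bbbk[S]$ (via $x_i\mapsto\chi^{\mathbf a_i}$) has depth $1$ (projective dimension $n-1$). $\mathrm{pos}(S)=\{\sum_i\lambda_i\mathbf a_i:\lambda_i\in\mathbb Q_{\ge0}\}$, $\mathcal H(S)=(\mathrm{pos}(S)\setminus S)\cap\mathbb N^d$. A term order on $\mathbb N^d$ is a total order compatible with addition with $0$ least. $\mathbf f\in\mathcal H(S)$ is a Frobenius element of $S$ if $\mathbf f=\max_\prec\mathcal H(S)$ for some term order $\prec$. Let $G(\mathcal A)$ be the subgroup of $\mathbb Z^d$ generated by $\mathcal A$ and $\mathrm{relint}(\mathrm{pos}(S))$ the relative interior of $\mathrm{pos}(S)$. A Frobenius vector of $S$ is an $\mathbf f\in G(\mathcal A)\setminus S$ such that $\mathbf f+(\mathrm{relint}(\mathrm{pos}(S))\cap G(\mathcal A))\subseteq S\setminus\{0\}$. *)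

(* Defs.v *)
From HB Require Import structures.
From mathcomp Require Import all_boot all_order all_algebra.
From mathcomp Require Import mpoly.
Set Implicit Arguments. Unset Strict Implicit. Unset Printing Implicit Defensive.
Import Order.TTheory GRing.Theory Num.Theory.
Local Open Scope ring_scope.

(* N^d is represented by multinomials 'X_{1..d}; Z^d by 'rV[int]_d;
   Q^d by 'rV[rat]_d.  The generators are a : 'I_n -> 'X_{1..d}. *)

Definition toZ {d : nat} (m : 'X_{1..d}) : 'rV[int]_d := \row_j ((m j)%:Z).
Definition toQ {d : nat} (m : 'X_{1..d}) : 'rV[rat]_d := \row_j ((m j)%:R).
Definition ZtoQ {d : nat} (v : 'rV[int]_d) : 'rV[rat]_d := \row_j ((v 0 j)%:~R).

Section Semigroup.
Variables (n d : nat) (a : 'I_n -> 'X_{1..d}).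

Definition inS (v : 'rV[int]_d) : Prop :=
  exists c : 'I_n -> nat, v = \sum_(i < n) toZ (a i) *+ c i.

Definition inG (v : 'rV[int]_d) : Prop :=
  exists z : 'I_n -> int, v = \sum_(i < n) toZ (a i) *~ z i.

Definition inPos (x : 'rV[rat]_d) : Prop :=
  exists lam : 'I_n -> rat, (forall i, 0 <= lam i) /\
    x = \sum_(i < n) lam i *: toQ (a i).

Definition aff_hull (X : 'rV[rat]_d -> Prop) (x : 'rV[rat]_d) : Prop :=
  exists (m : nat) (c : 'I_m -> 'rV[rat]_d) (mu : 'I_m -> rat),
    (forall j, X (c j)) /\ \sum_(j < m) mu j = 1 /\
    x = \sum_(j < m) mu j *: c j.

Definition relint (X : 'rV[rat]_d -> Prop) (x : 'rV[rat]_d) : Prop :=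
  X x /\ exists e : rat, 0 < e /\
    forall y, aff_hull X y -> (forall j, `|y 0 j - x 0 j| < e) -> X y.

Definition inHoles (m : 'X_{1..d}) : Prop := inPos (toQ m) /\ ~ inS (toZ m).

Definition term_order (le : rel 'X_{1..d}) : Prop :=
  reflexive le /\ antisymmetric le /\ transitive le /\ total le /\
  (forall u v w, le u v -> le (mnm_add u w) (mnm_add v w)) /\
  (forall u, le (@mnm0 d) u).

Definition frobenius_element (f : 'X_{1..d}) : Prop :=
  inHoles f /\ exists le : rel 'X_{1..d}, term_order le /\
    forall h, inHoles h -> le h f.

Definition frobenius_vector (f : 'rV[int]_d) : Prop :=
  inG f /\ ~ inS f /\
  forall w : 'rV[int]_d, relint inPos (ZtoQ w) -> inG w ->
    inS (f + w) /\ f + w <> 0.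

(* The k[x_1..x_n]-module k[S] = image of x_i |-> t^{a_i} in k[t_1..t_d]. *)
Section Module.
Variable k : fieldType.

Definition phi (p : {mpoly k[n]}) : {mpoly k[d]} :=
  comp_mpoly [tuple 'X_[a i] | i < n] p.

Definition inM (m : {mpoly k[d]}) : Prop := exists p, m = phi p.

Definition inSubM (fs : seq {mpoly k[n]}) (m : {mpoly k[d]}) : Prop :=
  exists g : 'I_(size fs) -> {mpoly k[n]},
    m = \sum_(j < size fs) phi (fs`_j) * phi (g j).

Definition in_irrelevant (f : {mpoly k[n]}) : Prop := f@_(@mnm0 n) = 0.

Definition regular_seq (fs : seq {mpoly k[n]}) : Prop :=
  (forall i, (i < size fs)%N -> in_irrelevant fs`_i) /\
  (forall i, (i < size fs)%N -> forall m, inM m ->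
      inSubM (take i fs) (phi fs`_i * m) -> inSubM (take i fs) m) /\
  (exists m, inM m /\ ~ inSubM fs m).

(* depth_{(x)} k[S] = 1: (x)M <> M, and the maximal M-regular sequences in
   (x_1..x_n) (which all have the same length) have length 1. *)
Definition depth_one : Prop :=
  (exists m, inM m /\ ~ inSubM [seq 'X_i | i <- enum 'I_n] m) /\
  (exists fs, size fs = 1%N /\ regular_seq fs) /\
  ~ (exists fs, size fs = 2%N /\ regular_seq fs).

End Module.

Definition MPD (k : fieldType) : Prop := depth_one k.

End Semigroup.

(* Main.v *)
Require Import Defs.
From mathcomp Require Import all_boot all_order all_algebra.
From mathcomp Require Import mpoly.
From Stdlib Require Import Classical.
Set Implicit Arguments. Unset Strict Implicit. Unset Printing Implicit Defensive.
Import Order.TTheory GRing.Theory Num.Theory.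
Local Open Scope ring_scope.

Lemma toZD (d : nat) (u v : 'X_{1..d}) : toZ (mnm_add u v) = toZ u + toZ v.
Proof. by apply/rowP => j; rewrite !mxE mnmDE PoszD. Qed.

Lemma toQD (d : nat) (u v : 'X_{1..d}) : toQ (mnm_add u v) = toQ u + toQ v.
Proof. by apply/rowP => j; rewrite !mxE mnmDE natrD. Qed.

Lemma toQZ (d : nat) (u : 'X_{1..d}) : ZtoQ (toZ u) = toQ u.
Proof. by apply/rowP => j; rewrite !mxE. Qed.

Lemma toZ_inj (d : nat) (u v : 'X_{1..d}) : toZ u = toZ v -> u = v.
Proof.
move/rowP => H; apply/mnmP => j; have := H j; rewrite !mxE => -[] //.
Qed.

Lemma inPosD n d (a : 'I_n -> 'X_{1..d}) x y :
  inPos a x -> inPos a y -> inPos a (x + y).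
Proof.
move=> [l1 [H1 ->]] [l2 [H2 ->]]; exists (fun i => l1 i + l2 i); split.
  by move=> i; rewrite addr_ge0.
by rewrite -big_split /=; apply: eq_bigr => i _; rewrite scalerDl.
Qed.

Lemma inPos_ge0 n d (a : 'I_n -> 'X_{1..d}) x : inPos a x -> forall j, 0 <= x 0 j.
Proof.
move=> [l [Hl ->]] j; rewrite summxE; apply: sumr_ge0 => i _.
by rewrite !mxE mulr_ge0.
Qed.

Lemma inPos_gen n d (a : 'I_n -> 'X_{1..d}) i : inPos a (toQ (a i)).
Proof.
exists (fun j => (j == i)%:R); split; first by move=> j; rewrite ler0n.
rewrite (bigD1 i) //= eqxx scale1r big1 ?addr0 // => j /negbTE ->.
by rewrite scale0r.
Qed.

Theorem proposition3p3 (k : fieldType) (n d : nat) (a : 'I_n -> 'X_{1..d}) :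
  MPD a k ->
  forall f : 'X_{1..d}, frobenius_element a f -> frobenius_vector a (toZ f).
Proof.
move=> _ f [[Hpf HnSf] [le [[Hr [Ha [Ht [Htot [Hc H0]]]]] Hmax]]].
have key : forall m, m <> mnm0 -> inPos a (toQ m) -> inS a (toZ (mnm_add f m)).
  move=> m m0 Hm; apply: NNPP => HnS.
  have Hh : inHoles a (mnm_add f m) by split => //; rewrite toQD; apply: inPosD.
  have l1 := Hmax _ Hh.
  have l2 : le f (mnm_add f m).
    have := Hc mnm0 m f (H0 m).
    have -> : mnm_add mnm0 f = f by apply/mnmP => j; rewrite mnmDE mnm0E.
    by have -> : mnm_add m f = mnm_add f m by apply/mnmP => j; rewrite !mnmDE addnC.
  have E : f = mnm_add f m by apply: Ha; rewrite l1 l2.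
  apply: m0; apply/mnmP => j; move/mnmP: E => /(_ j); rewrite mnmDE mnm0E.
  by move=> /eqP; rewrite -{1}(addn0 (f j)) eqn_add2l => /eqP <-.
have [i0 Hi0] : exists i, a i <> mnm0.
  apply: NNPP => H; apply: HnSf.
  have Hall : forall i, a i = mnm0 by move=> i; apply: NNPP => Hi; apply: H; exists i.
  have -> : f = mnm0.
    move: Hpf => [l [_ Hl]]; apply/mnmP => j; move/rowP: Hl => /(_ j).
    rewrite summxE big1 ?mxE; last by move=> i _; rewrite Hall !mxE mnm0E mulr0.
    by move/eqP; rewrite mnm0E pnatr_eq0 => /eqP.
  exists (fun _ => 0%N); rewrite big1; last by move=> i _; rewrite mulr0n.
  by apply/rowP => j; rewrite !mxE mnm0E.
have [j0 Hj0] : exists j, a i0 j <> 0%N.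
  apply: NNPP => H; apply: Hi0; apply/mnmP => j; rewrite mnm0E.
  by apply: NNPP => Hj; apply: H; exists j.
split.
  have [c Hcc] := key _ Hi0 (inPos_gen a i0).
  exists (fun i => (c i)%:Z - (i == i0)%:Z).
  rewrite (eq_bigr (fun i => toZ (a i) *+ c i - toZ (a i) *+ (i == i0))); last first.
    by move=> i _; rewrite mulrzBr.
  rewrite sumrB -Hcc toZD (bigD1 i0) //= eqxx mulr1n big1 ?addr0 ?addrK //.
  by move=> j /negbTE ->; rewrite mulr0n.
split => //.
move=> w [Hpw [e [e0 He]]] _.
have w0 : forall j, (0 <= w 0 j)%R.
  by move=> j; have := inPos_ge0 Hpw j; rewrite mxE ler0z.
set mw := [multinom `|w ord0 j|%N | j < d].
have Emw : toZ mw = w by apply/rowP => j; rewrite !mxE mnmE gez0_abs.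
have Pmw : inPos a (toQ mw) by rewrite -toQZ Emw.
have [mw0|mwn0] := boolP (mw == mnm0).
  exfalso.
  set M := (\max_(j < d) a i0 j)%N.
  set t : rat := e / (M.+1)%:R.
  have t0 : 0 < t by rewrite divr_gt0 // ltr0n.
  have Hy : inPos a (- (t *: toQ (a i0))).
    apply: He.
      exists 2%N, (fun j : 'I_2 => if j == ord0 then 0 else toQ (a i0)),
        (fun j : 'I_2 => if j == ord0 then 1 + t else - t).
      split; first by move=> j; case: ifP => _; [exists (fun _ => 0); split => //; rewrite big1 // => i _; rewrite scale0r | exact: inPos_gen].
      rewrite !big_ord_recl !big_ord0 /= !addr0 scaler0 add0r scaleNr; split => //.
      by rewrite -addrA subrr addr0.
    move=> j; move/eqP: mw0 => mw0.
    have -> : ZtoQ w 0 j = 0 by rewrite -Emw mw0 !mxE mnm0E.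
    rewrite subr0 !mxE normrN normrM gtr0_norm // normr_nat.
    rewrite /t mulrAC ltr_pdivrMr ?ltr0n // ltr_pM2l // ltr_nat ltnS.
    exact: (leq_bigmax j).
  have := inPos_ge0 Hy j0; rewrite !mxE oppr_ge0 => H.
  have : 0 < t * (a i0 j0)%:R by rewrite mulr_gt0 // ltr0n lt0n; apply/eqP.
  by rewrite ltNge H.
have Hk : inS a (toZ (mnm_add f mw)).
  by apply: key => // E; rewrite E eqxx in mwn0.
rewrite toZD Emw in Hk; split => // Ez.
have : toZ (mnm_add f mw) = toZ mnm0 by rewrite toZD Emw Ez; apply/rowP => j; rewrite !mxE mnm0E.
move/toZ_inj/mnmP => H; move/negP: mwn0; apply; apply/eqP/mnmP => j.
by have := H j; rewrite !mnmDE !mnm0E => /eqP; rewrite addn_eq0 => /andP [_ /eqP].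
Qed.
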